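(* Let $b(n)=\lfloor n\varphi\rfloor$, $c(n)=\lfloor n\varphi^2+\tfrac12\rfloor$, and $x(n)=a(b(n))-b(a(n))$. Then: (a) $a(b(n))\ge b(a(n))$ for all $n\ge0$. (b) For $n\ge1$, $x(n)$ equals the parity (number mod $2$) of the number of $1$'s in the Fibonacci representation of $n-1$. (c) $b(a(b(n)))\ge a(b(a(n)))$ for all $n\ge 0$. (d) $a(a(b(n)))-a(b(a(n)))\in\{-2,0,2\}$ for all $n\ge0$. (e) Setting $d(n)=c(a(n))-a(b(n))-a(n)$, we have $d(n)\in\{-1,0,1\}$ for all $n\ge0$. (f) For $n\ge1$, $d(n)=0$ if and only if $\mathbf f[n-1]=1$. (g) For $n\ge 1$, $c(a(b(n)))+a(b(n))-a(b(b(n)))-2\,b(a(n))=1$.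
   Context: $\varphi=(1+\sqrt5)/2$. Let $(F_n)_{n\ge 0}$ be the Fibonacci numbers: $F_0=0$, $F_1=1$, $F_n=F_{n-1}+F_{n-2}$ for $n\ge 2$. Define $(a(n))_{n\ge 0}$ (OEIS A105774) by $a(0)=0$, $a(1)=1$, and for $n\ge 2$, $a(n)=F_{j+1}-a(n-F_j)$, where $j\ge 2$ is the unique index with $F_j<n\le F_{j+1}$. The Fibonacci (Zeckendorf) representation of $m\ge0$ is the binary string $e_1\cdots e_t$ with no two consecutive $1$'s and $m=\sum_{i=1}^t e_iF_{t-i+2}$ (empty for $m=0$). $\mathbf f=\mathbf f[0]\mathbf f[1]\mathbf f[2]\cdots=01001010\cdots$ is the infinite Fibonacci word, the fixed point of the morphism $0\mapsto 01$, $1\mapsto 0$. *)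

(* Defs.v *)
From Stdlib Require Import Reals Lia ZArith Arith List.
Import ListNotations.

Fixpoint fib (n : nat) : nat :=
  match n with
  | 0 => 0
  | S m => match m with
           | 0 => 1
           | S k => fib m + fib k
           end
  end.

Fixpoint jsearch (fuel j n : nat) : nat :=
  match fuel with
  | 0 => j
  | S f => if Nat.leb n (fib (S j)) then j else jsearch f (S j) n
  end.

(* For n >= 2: the unique j >= 2 with F_j < n <= F_{j+1}
   (= the least j >= 2 with n <= F_{j+1}; fuel n suffices since F_{j+1} >= j). *)
Definition jidx (n : nat) : nat := jsearch n 2 n.

(* a(0)=0, a(1)=1, a(n) = F_{j+1} - a(n - F_j) for n >= 2 (OEIS A105774).
   Fuel: n - F_j < n, so fuel n suffices. *)
Fixpoint a_aux (fuel n : nat) : nat :=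
  match fuel with
  | 0 => 0
  | S f =>
      match n with
      | 0 => 0
      | 1 => 1
      | _ => fib (S (jidx n)) - a_aux f (n - fib (jidx n))
      end
  end.

Definition a (n : nat) : nat := a_aux n n.

Open Scope R_scope.
Definition phi : R := (1 + sqrt 5) / 2.

Definition b (n : nat) : nat := Z.to_nat (Int_part (INR n * phi)).
Definition c (n : nat) : nat := Z.to_nat (Int_part (INR n * phi ^ 2 + / 2)).
Close Scope R_scope.

Open Scope Z_scope.
Definition x (n : nat) : Z := Z.of_nat (a (b n)) - Z.of_nat (b (a n)).
Definition d (n : nat) : Z :=
  Z.of_nat (c (a n)) - Z.of_nat (a (b n)) - Z.of_nat (a n).
Close Scope Z_scope.

(* Fibonacci representation: a binary string e_1 ... e_t (true = 1), no two
   consecutive 1's, with value sum_i e_i F_{t-i+2}. *)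
Fixpoint no11 (s : list bool) : Prop :=
  match s with
  | true :: ((true :: _) as _) => False
  | _ :: t => no11 t
  | [] => True
  end.

Fixpoint fib_val (s : list bool) : nat :=
  match s with
  | [] => 0
  | e :: t => (if e then fib (length t + 2) else 0) + fib_val t
  end.

Definition fib_rep (m : nat) (s : list bool) : Prop := no11 s /\ fib_val s = m.

Definition count_ones (s : list bool) : nat := count_occ Bool.bool_dec s true.

(* The Fibonacci word: fixed point of 0 -> 01, 1 -> 0.  sigma^(k+1)(0) has
   length F_{k+3} > k and is a prefix of the fixed point, so f[k] is its k-th letter. *)
Definition sigma (w : list nat) : list nat :=
  flat_map (fun l => match l with 0 => [0; 1] | _ => [0] end) w.

Definition fword (k : nat) : nat := nth k (Nat.iter (S k) sigma [0]) 0.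

(* Main.v *)
Require Import Defs.
From Stdlib Require Import ZArith List.
From Stdlib Require Import Reals Lra Lia Arith.
Import ListNotations.

Lemma fib_SS k : fib (S (S k)) = fib (S k) + fib k.
Proof. reflexivity. Qed.

Lemma fib_pos k : 1 <= k -> 1 <= fib k.
Proof.
  induction k as [k IH] using lt_wf_ind. intros Hk.
  destruct k as [|[|k]]; [lia|simpl; lia|].
  rewrite fib_SS. destruct k; [simpl; lia|].
  specialize (IH (S (S k)) ltac:(lia) ltac:(lia)). lia.
Qed.

Lemma fib_mono_S k : fib k <= fib (S k).
Proof. destruct k; [simpl; lia|]. rewrite fib_SS. lia. Qed.

Lemma fib_mono i j : i <= j -> fib i <= fib j.
Proof. induction 1; [lia|]. pose proof (fib_mono_S m). lia. Qed.

Lemma fib_ge k : k - 1 <= fib k.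
Proof.
  induction k as [k IH] using lt_wf_ind.
  destruct k as [|[|[|k]]]; [simpl; lia|simpl; lia|simpl; lia|].
  pose proof (IH (S (S k)) ltac:(lia)). pose proof (IH (S k) ltac:(lia)).
  pose proof (fib_pos (S k) ltac:(lia)).
  change (fib (S (S (S k)))) with (fib (S (S k)) + fib (S k)). lia.
Qed.

Lemma fib_lt k : 2 <= k -> fib k < fib (S k).
Proof.
  intros H. destruct k as [|k]; [lia|]. rewrite fib_SS. pose proof (fib_pos k). lia.
Qed.

Lemma jsearch_ge fuel j n : j <= jsearch fuel j n.
Proof.
  revert j; induction fuel; intros j; cbn [jsearch]; [lia|].
  destruct (n <=? fib (S j)); [lia|]. specialize (IHfuel (S j)); lia.
Qed.

Lemma jsearch_eq fuel j n k : 2 <= j -> j <= k -> k - j <= fuel ->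
  fib k < n -> n <= fib (S k) -> jsearch fuel j n = k.
Proof.
  revert j; induction fuel; intros j Hj Hjk Hf Hk1 Hk2; cbn [jsearch].
  - lia.
  - destruct (Nat.leb_spec n (fib (S j))).
    + destruct (Nat.eq_dec j k); [auto|].
      pose proof (fib_mono (S j) k ltac:(lia)). lia.
    + destruct (Nat.eq_dec j k); [subst; lia|].
      apply IHfuel; lia.
Qed.

Lemma jidx_eq n k : 2 <= k -> fib k < n -> n <= fib (S k) -> jidx n = k.
Proof.
  intros. unfold jidx. apply jsearch_eq; try lia.
  pose proof (fib_ge k). lia.
Qed.

Lemma jidx_ge n : 2 <= jidx n.
Proof. unfold jidx. apply jsearch_ge. Qed.

Lemma a_aux_S f m : m <= f -> a_aux f m = a_aux (S f) m.
Proof.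
  revert m; induction f; intros m Hm.
  - destruct m; [reflexivity|lia].
  - destruct m as [|[|m]]; try reflexivity.
    change (a_aux (S f) (S (S m))) with
      (fib (S (jidx (S (S m)))) - a_aux f (S (S m) - fib (jidx (S (S m))))).
    change (a_aux (S (S f)) (S (S m))) with
      (fib (S (jidx (S (S m)))) - a_aux (S f) (S (S m) - fib (jidx (S (S m))))).
    rewrite IHf; [reflexivity|].
    pose proof (fib_pos (jidx (S (S m))) ltac:(pose proof (jidx_ge (S (S m))); lia)). lia.
Qed.

Lemma a_aux_fuel f m : m <= f -> a_aux f m = a m.
Proof.
  intros H. unfold a. induction H; [reflexivity|]. rewrite <- a_aux_S; auto.
Qed.

Lemma a_rec n : 2 <= n -> a n = fib (S (jidx n)) - a (n - fib (jidx n)).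
Proof.
  intros H. destruct n as [|[|n]]; try lia.
  unfold a at 1.
  change (a_aux (S (S n)) (S (S n))) with
      (fib (S (jidx (S (S n)))) - a_aux (S n) (S (S n) - fib (jidx (S (S n))))).
  f_equal. apply a_aux_fuel.
  pose proof (fib_pos (jidx (S (S n))) ltac:(pose proof (jidx_ge (S (S n))); lia)). lia.
Qed.

Fixpoint valid (E : nat) (L : list nat) : Prop :=
  match L with [] => True | e :: L' => E <= e /\ valid (e + 2) L' end.
Fixpoint V (L : list nat) : nat := match L with [] => 0 | e :: L' => fib e + V L' end.
Fixpoint Bz (L : list nat) : Z :=
  match L with [] => 0%Z | e :: L' => (Z.of_nat (fib (S e)) - Bz L')%Z end.
Fixpoint sgn (L : list nat) : Z := match L with [] => (-1)%Z | _ :: L' => (- sgn L')%Z end.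

Lemma valid_weaken E E' L : valid E L -> E' <= E -> valid E' L.
Proof. destruct L; simpl; intuition lia. Qed.

Lemma valid_all E L : valid E L -> forall e, In e L -> E <= e.
Proof.
  revert E; induction L as [|e0 L IH]; simpl; intros E H e He; [contradiction|].
  destruct H as [H1 H2]. destruct He as [<-|He]; [lia|]. specialize (IH _ H2 e He). lia.
Qed.

Lemma valid_app1 E L k : valid E (L ++ [k]) ->
  valid E L /\ (forall e, In e L -> e + 2 <= k) /\ E <= k.
Proof.
  revert E; induction L as [|e0 L IH]; simpl; intros E H.
  - repeat split; try tauto; lia.
  - destruct H as [H1 H2]. destruct (IH _ H2) as (A & B & C).
    repeat split; try lia; auto.
    intros e [<-|He]; [lia|]. auto.
Qed.

Lemma valid_snoc E L k : valid E L -> (forall e, In e L -> e + 2 <= k) -> E <= k ->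
  valid E (L ++ [k]).
Proof.
  revert E; induction L as [|e0 L IH]; simpl; intros E H1 H2 H3; [tauto|].
  destruct H1 as [A B]. split; [exact A|]. pose proof (H2 e0 (or_introl eq_refl)).
  apply IH; [exact B| |lia]. intros e He. apply H2. now right.
Qed.

Lemma V_app L k : V (L ++ [k]) = V L + fib k.
Proof. induction L; simpl; lia. Qed.

Lemma sgn_app L k : sgn (L ++ [k]) = (- sgn L)%Z.
Proof. induction L; simpl; [reflexivity|]. rewrite IHL. reflexivity. Qed.

Lemma Bz_app L k : Bz (L ++ [k]) = (Bz L - sgn L * Z.of_nat (fib (S k)))%Z.
Proof. induction L; cbn [Bz sgn app]; [lia|]. rewrite IHL. lia. Qed.

Lemma sgn_pm L : sgn L = 1%Z \/ sgn L = (-1)%Z.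
Proof. induction L; simpl; lia. Qed.

Lemma V_bound E L K : valid E L -> 1 <= E -> E <= K + 2 -> (forall e, In e L -> e <= K) ->
  V L + fib (E - 1) <= fib (S K).
Proof.
  revert E; induction L as [|e0 L IH]; cbn [V valid In]; intros E H1 H2 H3 H4.
  - rewrite Nat.add_0_l. apply fib_mono. lia.
  - destruct H1 as [A B]. pose proof (H4 e0 (or_introl eq_refl)).
    specialize (IH (e0 + 2) B ltac:(lia) ltac:(lia) (fun e He => H4 e (or_intror He))).
    replace (e0 + 2 - 1) with (S e0) in IH by lia.
    destruct e0 as [|e0]; [lia|]. rewrite fib_SS in IH.
    pose proof (fib_mono (E - 1) e0 ltac:(lia)). lia.
Qed.

Lemma a_formula L : valid 2 L ->
  Z.of_nat (a (V L + 1)) = (sgn L * (Bz L - 1))%Z /\ 1 <= a (V L + 1) /\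
  (forall K, (forall e, In e L -> e <= K) -> a (V L + 1) <= fib (S K)).
Proof.
  induction L as [|k L IH] using rev_ind; intros HV.
  - change (V [] + 1) with 1. change (a 1) with 1. repeat split; auto.
    intros K _. apply fib_pos. lia.
  - destruct (valid_app1 _ _ _ HV) as (HL & Hle & Hk).
    specialize (IH HL). destruct IH as (IH1 & IH2 & IH3).
    assert (Hall := valid_all _ _ HL).
    assert (HVb : V L + 1 <= fib (k - 1)).
    { destruct L as [|e0 L'].
      - simpl. apply fib_pos. lia.
      - pose proof (Hle e0 (or_introl eq_refl)). pose proof (Hall e0 (or_introl eq_refl)).
        pose proof (V_bound 2 (e0 :: L') (k - 2) HL ltac:(lia) ltac:(lia)
                      (fun e He => ltac:(pose proof (Hle e He); lia))).
        replace (S (k - 2)) with (k - 1) in H1 by lia. simpl in H1 |- *. lia. }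
    assert (Ha' : a (V L + 1) <= fib (k - 1)).
    { destruct L as [|e0 L'].
      - simpl. change (a 1) with 1. apply fib_pos. lia.
      - replace (k - 1) with (S (k - 2)) by (pose proof (Hle e0 (or_introl eq_refl)); lia).
        apply IH3. intros e He. pose proof (Hle e He). lia. }
    assert (Hfk : fib (S k) = fib k + fib (k - 1)).
    { destruct k as [|k]; [lia|]. rewrite fib_SS. replace (S k - 1) with k by lia. lia. }
    assert (Hpk := fib_pos (k-1) ltac:(lia)). assert (Hpk2 := fib_pos k ltac:(lia)).
    rewrite V_app.
    assert (Hrec : a (V L + fib k + 1) = fib (S k) - a (V L + 1)).
    { rewrite a_rec by lia.
      rewrite (jidx_eq _ k) by lia.
      f_equal. f_equal. lia. }
    rewrite Hrec. repeat split.
    + rewrite Nat2Z.inj_sub by lia. rewrite IH1, sgn_app, Bz_app.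
      destruct (sgn_pm L) as [E|E]; rewrite E; lia.
    + lia.
    + intros K HK. pose proof (HK k (ltac:(apply in_or_app; right; left; reflexivity))).
      pose proof (fib_mono (S k) (S K) ltac:(lia)). lia.
Qed.

Fixpoint toL (s : list bool) : list nat :=
  match s with [] => [] | e :: t => toL t ++ (if e then [length t + 2] else []) end.

Lemma toL_bound s : forall e, In e (toL s) -> 2 <= e /\ e <= length s + 1.
Proof.
  induction s as [|e0 t IH]; simpl; intros e He; [contradiction|].
  apply in_app_or in He. destruct He as [He|He]; [specialize (IH e He); lia|].
  destruct e0; simpl in He; [destruct He as [<-|[]]; lia| contradiction].
Qed.

Lemma no11_tail e t : no11 (e :: t) -> no11 t.
Proof. destruct e, t as [|[] t]; simpl; tauto. Qed.

Lemma toL_valid s : no11 s -> valid 2 (toL s).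
Proof.
  induction s as [|e0 t IH]; simpl; intros H; [exact I|].
  pose proof (IH (no11_tail _ _ H)) as Hv.
  destruct e0.
  - apply valid_snoc; auto; [|lia].
    destruct t as [|[] t']; [simpl; tauto|simpl in H; contradiction|].
    intros e He. simpl in He. rewrite app_nil_r in He. apply toL_bound in He. simpl. lia.
  - rewrite app_nil_r. auto.
Qed.

Lemma V_toL s : V (toL s) = fib_val s.
Proof.
  induction s as [|e0 t IH]; simpl; [reflexivity|].
  destruct e0; simpl; [rewrite V_app, IH; lia|rewrite app_nil_r, IH; lia].
Qed.

Lemma len_toL s : length (toL s) = count_ones s.
Proof.
  induction s as [|e0 t IH]; simpl; [reflexivity|]. unfold count_ones in *. simpl.
  rewrite length_app, IH. destruct e0; simpl; lia.
Qed.

Lemma rep_exists_len j : forall m, m < fib (j + 2) ->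
  exists s, no11 s /\ fib_val s = m /\ length s = j.
Proof.
  induction j as [j IH] using lt_wf_ind. intros m Hm.
  destruct j as [|[|j]].
  - exists []. simpl in *. repeat split; lia.
  - simpl in Hm. destruct m as [|[|m]]; [exists [false]|exists [true]|lia]; simpl; repeat split; lia.
  - destruct (Nat.lt_ge_cases m (fib (S j + 2))) as [Hl|Hl].
    + destruct (IH (S j) ltac:(lia) m Hl) as (s & A & B & C).
      exists (false :: s). cbn [no11 fib_val length]. repeat split; [exact A|lia|lia].
    + replace (S (S j) + 2) with (S (S (j + 2))) in Hm by lia. rewrite fib_SS in Hm.
      replace (S j + 2) with (S (j + 2)) in Hl by lia.
      destruct (IH j ltac:(lia) (m - fib (S (j + 2))) ltac:(lia)) as (s & A & B & C).
      exists (true :: false :: s). cbn [no11 fib_val length]. rewrite C. split; [exact A|].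
      replace (S j + 2) with (S (j + 2)) by lia. lia.
Qed.

Lemma rep_exists m : exists s, fib_rep m s.
Proof.
  destruct (rep_exists_len m m) as (s & A & B & _).
  - pose proof (fib_ge (m + 2)). lia.
  - exists s. split; auto.
Qed.

Lemma zeck_exists m : exists L, valid 2 L /\ V L = m.
Proof.
  destruct (rep_exists m) as (s & A & B). exists (toL s). split.
  - apply toL_valid; auto.
  - rewrite V_toL; auto.
Qed.

Open Scope R_scope.

Definition u : R := phi - 1.

Lemma sqrt5_facts : 2.2 < sqrt 5 < 2.25 /\ sqrt 5 * sqrt 5 = 5.
Proof.
  pose proof (sqrt_sqrt 5 ltac:(lra)). pose proof (sqrt_pos 5).
  split; [split; nra|auto].
Qed.

Lemma u_facts : 0.6 < u < 0.625 /\ u * u = 1 - u.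
Proof.
  destruct sqrt5_facts as [[A B] C]. unfold u, phi. split; [split|]; nra.
Qed.

Lemma phi_u : phi = 1 + u.
Proof. unfold u; ring. Qed.

Lemma upow_pos n : 0 < u ^ n.
Proof. destruct u_facts. apply pow_lt. lra. Qed.

Lemma upow_le i j : (i <= j)%nat -> u ^ j <= u ^ i.
Proof.
  intros H. induction H; [lra|]. simpl. pose proof (upow_pos m). destruct u_facts. nra.
Qed.

Lemma psi_pow k : (- u) ^ k = if Nat.even k then u ^ k else - u ^ k.
Proof.
  induction k; [simpl; lra|].
  rewrite Nat.even_succ, <- Nat.negb_even. simpl pow. rewrite IHk.
  destruct (Nat.even k); simpl; lra.
Qed.

Lemma binet k : INR (fib (S k)) = phi * INR (fib k) + (- u) ^ k.
Proof.
  induction k as [k IH] using lt_wf_ind.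
  destruct k as [|[|k]].
  - simpl. lra.
  - rewrite phi_u. simpl. lra.
  - rewrite fib_SS. rewrite plus_INR.
    rewrite (IH (S k)) by lia. rewrite (IH k) by lia.
    destruct u_facts as [_ U2]. simpl pow. rewrite phi_u.
    set (X := (-u)^k). set (F := INR (fib k)).
    apply Rminus_diag_uniq.
    transitivity ((1 - u - u*u)*((1+u)*F+X)); [ring| rewrite U2; ring].
Qed.

Fixpoint Psum (L : list nat) : R := match L with [] => 0 | e :: L' => (- u) ^ e + Psum L' end.
Fixpoint Tsum (L : list nat) : R := match L with [] => 0 | e :: L' => (- u) ^ e - Tsum L' end.

Lemma V_shift L : INR (V (map S L)) = phi * INR (V L) + Psum L.
Proof.
  induction L as [|e L IH]; cbn [V map Psum]; [simpl; lra|].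
  rewrite !plus_INR, IH, binet. ring.
Qed.

Lemma Bz_shift L : IZR (Bz (map S L)) = phi * IZR (Bz L) + Tsum (map S L).
Proof.
  induction L as [|e L IH]; cbn [Bz map Tsum]; [simpl; lra|].
  rewrite !minus_IZR, IH, <- !INR_IZR_INZ. rewrite (binet (S e)). ring.
Qed.

Definition TE (K : nat) (t : R) : Prop :=
  (Nat.even K = true -> - u ^ (K+1) / 2 < t < u ^ K / 2) /\
  (Nat.even K = false -> - u ^ K / 2 < t < u ^ (K+1) / 2).
Definition TC (k : nat) (t : R) : Prop :=
  (Nat.even k = true -> u ^ (k+2) / 2 < t < u ^ k / 2) /\
  (Nat.even k = false -> - u ^ k / 2 < t < - u ^ (k+2) / 2).

Lemma upow_S n : u ^ (S n) = u ^ n * u.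
Proof. simpl. ring. Qed.

Lemma T_step k t : TE (k + 2) t -> TC k ((- u) ^ (k + 2) - t).
Proof.
  intros [H1 H2]. rewrite psi_pow.
  replace (Nat.even (k+2)) with (Nat.even k) in *
    by (rewrite Nat.even_add; destruct (Nat.even k); reflexivity).
  replace (k + 2 + 1)%nat with (S (S (S k))) in * by lia.
  replace (k + 2)%nat with (S (S k)) in * by lia.
  unfold TC. replace (k + 2)%nat with (S (S k)) by lia.
  rewrite !upow_S in *. pose proof (upow_pos k). destruct u_facts as [[U1 U2] U3].
  set (p := u ^ k) in *.
  assert (E2 : p * u * u = p - p * u) by (rewrite Rmult_assoc, U3; ring).
  assert (E3 : p * u * u * u = 2 * (p * u) - p) by (transitivity ((p*u*u)*u); [ring|]; rewrite E2; transitivity (p*u - p*u*u); [ring|]; rewrite E2; ring).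
  rewrite E2, E3 in *.
  split; intros E; [specialize (H1 E)|specialize (H2 E)]; rewrite E; split; lra.
Qed.

Lemma T_weaken k K t : (K <= k)%nat -> TC k t -> TE K t.
Proof.
  intros Hk [H1 H2]. pose proof (upow_pos k). pose proof (upow_pos (k+2)).
  pose proof (upow_pos K). pose proof (upow_pos (K+1)).
  split; intros E; destruct (Nat.even k) eqn:Ek.
  - destruct (H1 eq_refl). pose proof (upow_le K k Hk). lra.
  - destruct (H2 eq_refl). assert (K <> k) by (intro; subst; congruence).
    pose proof (upow_le (K+1) k ltac:(lia)). lra.
  - destruct (H1 eq_refl). assert (K <> k) by (intro; subst; congruence).
    pose proof (upow_le (K+1) k ltac:(lia)). lra.
  - destruct (H2 eq_refl). pose proof (upow_le K k Hk). lra.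
Qed.

Lemma T_bounds L : forall K, valid (K + 2) L -> TE K (Tsum L).
Proof.
  induction L as [|e L IH]; intros K HV.
  - cbn [Tsum]. pose proof (upow_pos K). pose proof (upow_pos (K+1)).
    split; intros; lra.
  - destruct HV as [H1 H2]. cbn [Tsum].
    replace e with ((e - 2) + 2)%nat by lia.
    apply (T_weaken (e - 2)); [lia|]. apply T_step. apply IH.
    replace (e - 2 + 2 + 2)%nat with (e + 2)%nat by lia. auto.
Qed.

Lemma T_cons k L : valid (k + 4) L -> TC k (Tsum ((k + 2)%nat :: L)).
Proof.
  intros HV. cbn [Tsum]. apply T_step. apply T_bounds.
  replace (k + 2 + 2)%nat with (k + 4)%nat by lia. auto.
Qed.

Definition PE (K : nat) (t : R) : Prop :=
  (Nat.even K = true -> - u ^ (K+2) < t < u ^ (K+1)) /\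
  (Nat.even K = false -> - u ^ (K+1) < t < u ^ (K+2)).
Definition PC (k : nat) (t : R) : Prop :=
  (Nat.even k = true -> u ^ (k+3) < t < u ^ (k+1)) /\
  (Nat.even k = false -> - u ^ (k+1) < t < - u ^ (k+3)).

Lemma P_step k t : PE (k + 2) t -> PC k ((- u) ^ (k + 2) + t).
Proof.
  intros [H1 H2]. rewrite psi_pow.
  replace (Nat.even (k+2)) with (Nat.even k) in *
    by (rewrite Nat.even_add; destruct (Nat.even k); reflexivity).
  unfold PC.
  replace (k + 2 + 1)%nat with (S (S (S k))) in * by lia.
  replace (k + 2 + 2)%nat with (S (S (S (S k)))) in * by lia.
  replace (k + 3)%nat with (S (S (S k))) in * by lia.
  replace (k + 1)%nat with (S k) in * by lia.
  replace (k + 2)%nat with (S (S k)) in * by lia.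
  rewrite !upow_S in *. pose proof (upow_pos k). destruct u_facts as [[U1 U2] U3].
  set (p := u ^ k) in *.
  assert (E2 : p * u * u = p - p * u) by (rewrite Rmult_assoc, U3; ring).
  assert (E3 : p * u * u * u = 2 * (p * u) - p) by (transitivity ((p*u*u)*u); [ring|]; rewrite E2; transitivity (p*u - p*u*u); [ring|]; rewrite E2; ring).
  assert (E4 : p * u * u * u * u = 2 * p - 3 * (p * u)) by (transitivity ((p*u*u*u)*u); [ring|]; rewrite E3; transitivity (2 * (p*u*u) - p*u); [ring|]; rewrite E2; ring).
  rewrite E4, E3, E2 in *.
  split; intros E; [specialize (H1 E)|specialize (H2 E)]; rewrite E; split; lra.
Qed.

Lemma P_weaken k K t : (K <= k)%nat -> PC k t -> PE K t.
Proof.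
  intros Hk [H1 H2]. pose proof (upow_pos (k+1)). pose proof (upow_pos (k+3)).
  pose proof (upow_pos (K+2)). pose proof (upow_pos (K+1)).
  split; intros E; destruct (Nat.even k) eqn:Ek.
  - destruct (H1 eq_refl). pose proof (upow_le (K+1) (k+1) ltac:(lia)). lra.
  - destruct (H2 eq_refl). assert (K <> k) by (intro; subst; congruence).
    pose proof (upow_le (K+2) (k+1) ltac:(lia)). lra.
  - destruct (H1 eq_refl). assert (K <> k) by (intro; subst; congruence).
    pose proof (upow_le (K+2) (k+1) ltac:(lia)). lra.
  - destruct (H2 eq_refl). pose proof (upow_le (K+1) (k+1) ltac:(lia)). lra.
Qed.

Lemma P_bounds L : forall K, valid (K + 2) L -> PE K (Psum L).
Proof.
  induction L as [|e L IH]; intros K HV.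
  - cbn [Psum]. pose proof (upow_pos (K+2)). pose proof (upow_pos (K+1)).
    split; intros; lra.
  - destruct HV as [H1 H2]. cbn [Psum].
    replace e with ((e - 2) + 2)%nat by lia.
    apply (P_weaken (e - 2)); [lia|]. apply P_step. apply IH.
    replace (e - 2 + 2 + 2)%nat with (e + 2)%nat by lia. auto.
Qed.

Open Scope R_scope.

Lemma Int_part_eq (r : R) (z : Z) : IZR z <= r < IZR z + 1 -> Int_part r = z.
Proof.
  intros [H1 H2]. unfold Int_part.
  assert (z + 1 = up r)%Z.
  { apply tech_up; rewrite plus_IZR; simpl; lra. }
  lia.
Qed.

Lemma Int_part_nonneg r : 0 <= r -> (0 <= Int_part r)%Z.
Proof.
  intros H. destruct (base_Int_part r) as [_ H2].
  assert (-1 < IZR (Int_part r)) by lra.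
  apply lt_IZR in H0. lia.
Qed.

Lemma b_Z y : Z.of_nat (b y) = Int_part (INR y * phi).
Proof.
  unfold b. apply Z2Nat.id. apply Int_part_nonneg.
  pose proof (pos_INR y). rewrite phi_u. destruct u_facts. nra.
Qed.

Lemma c_Z y : Z.of_nat (c y) = Int_part (INR y * phi ^ 2 + / 2).
Proof.
  unfold c. apply Z2Nat.id. apply Int_part_nonneg.
  pose proof (pos_INR y). rewrite phi_u. destruct u_facts. nra.
Qed.

Lemma valid_map E L : valid E L -> valid (S E) (map S L).
Proof.
  revert E; induction L as [|e L IH]; cbn [valid map]; intros E H; auto.
  destruct H. split; [lia|]. replace (S e + 2)%nat with (S (e + 2)) by lia. auto.
Qed.

Lemma sgn_map L : sgn (map S L) = sgn L.
Proof. induction L; cbn [sgn map]; congruence. Qed.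

Lemma b_formula L : valid 2 L -> b (V L + 1) = (V (map S L) + 1)%nat.
Proof.
  intros HV. apply Nat2Z.inj. rewrite b_Z. apply Int_part_eq.
  rewrite plus_INR, Nat2Z.inj_add, plus_IZR, <- !INR_IZR_INZ, V_shift. simpl (INR 1).
  pose proof (P_bounds L 0 HV) as [P1 _]. specialize (P1 eq_refl). simpl in P1.
  rewrite phi_u in *. destruct u_facts as [_ U].
  assert (u * (u * 1) = 1 - u) by (rewrite Rmult_1_r; exact U). split; lra.
Qed.

Definition mT : R := / 2 - u.

Lemma bc_gen (y : nat) (B B' s : Z) (T : R) :
  (s = 1 \/ s = -1)%Z -> Z.of_nat y = (s * (B - 1))%Z -> IZR B' = phi * IZR B + T ->
  - u < T < 1 - u ->
  (Z.of_nat (b y) = if Z.eqb s 1 then (B' - 2)%Z else (- B' + 1)%Z) /\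
  (mT < T < 3 / 2 - u -> Z.of_nat (c y) = (Z.of_nat y + if Z.eqb s 1 then B' - 2 else - B' + 2)%Z) /\
  (- / 2 - u < T < mT -> Z.of_nat (c y) = (Z.of_nat y + if Z.eqb s 1 then B' - 1 else - B' + 1)%Z).
Proof.
  intros Hs Hy HB' HT.
  assert (Hyr : INR y = IZR s * (IZR B - 1)).
  { rewrite INR_IZR_INZ, Hy, mult_IZR, minus_IZR. reflexivity. }
  assert (Hphi : INR y * phi = IZR s * (IZR B' - T - phi)).
  { rewrite Hyr, HB'. ring. }
  assert (Hphi2 : INR y * phi ^ 2 + / 2 = INR y + IZR s * (IZR B' - T - phi) + / 2).
  { rewrite <- Hphi. rewrite phi_u. destruct u_facts as [_ U].
    simpl pow. transitivity (INR y * (1 + 2 * u + u * u) + / 2); [ring|]. rewrite U. ring. }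
  unfold mT.
  destruct Hs as [-> | ->]; simpl Z.eqb; cbv iota.
  - repeat split.
    + rewrite b_Z, Hphi. apply Int_part_eq. rewrite phi_u, minus_IZR. simpl. lra.
    + intros HT2. rewrite c_Z, Hphi2. apply Int_part_eq.
      rewrite plus_IZR, minus_IZR, <- INR_IZR_INZ, phi_u. simpl. lra.
    + intros HT2. rewrite c_Z, Hphi2. apply Int_part_eq.
      rewrite plus_IZR, minus_IZR, <- INR_IZR_INZ, phi_u. simpl. lra.
  - repeat split.
    + rewrite b_Z, Hphi. apply Int_part_eq. rewrite phi_u, plus_IZR, opp_IZR. simpl. lra.
    + intros HT2. rewrite c_Z, Hphi2. apply Int_part_eq.
      rewrite !plus_IZR, opp_IZR, <- INR_IZR_INZ, phi_u. simpl. lra.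
    + intros HT2. rewrite c_Z, Hphi2. apply Int_part_eq.
      rewrite !plus_IZR, opp_IZR, <- INR_IZR_INZ, phi_u. simpl. lra.
Qed.

Close Scope R_scope. Open Scope nat_scope.

Definition W (j : nat) : list nat := Nat.iter j Defs.sigma [0].

Lemma sigma_app x y : Defs.sigma (x ++ y) = Defs.sigma x ++ Defs.sigma y.
Proof. unfold Defs.sigma. apply flat_map_app. Qed.

Lemma W_rec j : W (S (S j)) = W (S j) ++ W j.
Proof.
  induction j; [reflexivity|].
  change (W (S (S (S j)))) with (Defs.sigma (W (S (S j)))). rewrite IHj at 1. rewrite sigma_app. reflexivity.
Qed.

Lemma W_len j : length (W j) = fib (j + 2).
Proof.
  induction j as [j IH] using lt_wf_ind. destruct j as [|[|j]]; [reflexivity|reflexivity|].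
  rewrite W_rec, length_app, IH, IH by lia.
  replace (S (S j) + 2) with (S (S (S (S j)))) by lia. rewrite fib_SS.
  replace (S j + 2) with (S (S (S j))) by lia. replace (j + 2) with (S (S j)) by lia. lia.
Qed.

Lemma W_prefix j m : m < length (W j) -> nth m (W j) 0 = nth m (W (S j)) 0.
Proof.
  intros H. destruct j as [|j].
  - simpl in H. destruct m; [reflexivity|lia].
  - rewrite W_rec, app_nth1; auto.
Qed.

Lemma W_mono j j' m : j <= j' -> m < length (W j) -> nth m (W j) 0 = nth m (W j') 0.
Proof.
  intros H. induction H; intros Hm; [reflexivity|].
  rewrite IHle by auto. apply W_prefix.
  rewrite !W_len in *. pose proof (fib_mono (j + 2) (m0 + 2) ltac:(lia)). lia.
Qed.

Lemma fword_W j m : m < length (W j) -> fword m = nth m (W j) 0.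
Proof.
  intros H. unfold fword. change (Nat.iter (S m) Defs.sigma [0]) with (W (S m)).
  assert (Hm : m < length (W (S m))).
  { rewrite W_len. pose proof (fib_ge (S m + 2)). lia. }
  destruct (Nat.le_ge_cases j (S m)).
  - symmetry. apply W_mono; auto.
  - apply W_mono; auto.
Qed.

Definition hd2 (L : list nat) : bool := match L with 2 :: _ => true | _ => false end.

Lemma fword_formula L : valid 2 L -> fword (V L) = if hd2 L then 1 else 0.
Proof.
  induction L as [|k L IH] using rev_ind; intros HV.
  - reflexivity.
  - destruct (valid_app1 _ _ _ HV) as (HL & Hle & Hk).
    specialize (IH HL). assert (Hall := valid_all _ _ HL).
    rewrite V_app.
    destruct (Nat.eq_dec k 2) as [->|Hk3].
    + destruct L as [|e0 L']; [reflexivity|].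
      pose proof (Hle e0 (or_introl eq_refl)). pose proof (Hall e0 (or_introl eq_refl)). lia.
    + assert (HVb : V L < fib (k - 1)).
      { destruct L as [|e0 L'].
        - simpl. apply fib_pos. lia.
        - pose proof (Hle e0 (or_introl eq_refl)). pose proof (Hall e0 (or_introl eq_refl)).
          pose proof (V_bound 2 (e0 :: L') (k - 2) HL ltac:(lia) ltac:(lia)
                        (fun e He => ltac:(pose proof (Hle e He); lia))).
          replace (S (k - 2)) with (k - 1) in H1 by lia. simpl in H1 |- *. lia. }
      assert (HW : W (k - 1) = W (k - 2) ++ W (k - 3)).
      { replace (k - 1) with (S (S (k - 3))) by lia. rewrite W_rec. f_equal. f_equal. lia. }
      assert (L2 : length (W (k - 2)) = fib k) by (rewrite W_len; f_equal; lia).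
      assert (L3 : length (W (k - 3)) = fib (k - 1)) by (rewrite W_len; f_equal; lia).
      assert (Hfk : fib (S k) = fib k + fib (k - 1)).
      { destruct k as [|k]; [lia|]. rewrite fib_SS. replace (S k - 1) with k by lia. lia. }
      rewrite (fword_W (k - 1)).
      2:{ rewrite W_len. replace (k - 1 + 2) with (S k) by lia. lia. }
      rewrite HW, app_nth2 by lia. rewrite L2. replace (V L + fib k - fib k) with (V L) by lia.
      rewrite <- fword_W by lia. rewrite IH.
      destruct L as [|e0 L']; [simpl; destruct k as [|[|[|k]]]; simpl; try lia; reflexivity|].
      reflexivity.
Qed.

Lemma b0 : b 0 = 0.
Proof. apply Nat2Z.inj. rewrite b_Z. apply Int_part_eq. simpl. lra. Qed.

Lemma c0 : c 0 = 0.
Proof. apply Nat2Z.inj. rewrite c_Z. apply Int_part_eq. simpl. lra. Qed.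

Lemma Int_part_mono r1 r2 : (r1 <= r2)%R -> (Int_part r1 <= Int_part r2)%Z.
Proof.
  intros H. destruct (base_Int_part r1) as [A _]. destruct (base_Int_part r2) as [_ B].
  assert (IZR (Int_part r1) < IZR (Int_part r2) + 1)%R by lra.
  rewrite <- plus_IZR in H0. apply lt_IZR in H0. lia.
Qed.

Lemma b_mono y1 y2 : y1 <= y2 -> b y1 <= b y2.
Proof.
  intros H. apply Nat2Z.inj_le. rewrite !b_Z. apply Int_part_mono.
  apply Rmult_le_compat_r; [rewrite phi_u; destruct u_facts; lra|]. apply le_INR; auto.
Qed.

Lemma a_le_b z : a z <= b z.
Proof.
  destruct z as [|z]; [rewrite b0; reflexivity|].
  destruct (zeck_exists z) as (L & HV & HVz). subst z.
  replace (S (V L)) with (V L + 1) by lia. rewrite b_formula by auto.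
  destruct L as [|k L'' _] using rev_ind; [reflexivity|].
  destruct (a_formula _ HV) as (_ & _ & H3).
  assert (Ha := H3 k (fun e He => ltac:(
    apply in_app_or in He; destruct He as [He|[He|[]]];
    [destruct (valid_app1 _ _ _ HV) as (_ & Hle & _); pose proof (Hle e He); lia|lia]))).
  assert (fib (S k) <= V (map S (L'' ++ [k]))) by (rewrite map_app; simpl map; rewrite V_app; lia).
  lia.
Qed.

Close Scope R_scope. Open Scope nat_scope.

Lemma u_pows : (u^2 = 1 - u /\ u^3 = 2*u - 1 /\ u^4 = 2 - 3*u /\ u^6 = 5 - 8*u)%R.
Proof.
  destruct u_facts as [_ U].
  assert (A2 : (u^2 = 1 - u)%R) by (simpl; rewrite Rmult_1_r; exact U).
  assert (A3 : (u^3 = 2*u - 1)%R) by (transitivity (u^2 * u)%R; [simpl; ring|]; rewrite A2; transitivity (u - u*u)%R; [ring|]; rewrite U; ring).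
  assert (A4 : (u^4 = 2 - 3*u)%R) by (transitivity (u^3 * u)%R; [simpl; ring|]; rewrite A3; transitivity (2*(u*u) - u)%R; [ring|]; rewrite U; ring).
  assert (A6 : (u^6 = 5 - 8*u)%R) by (transitivity (u^4 * (u*u))%R; [simpl; ring|]; rewrite A4, U; transitivity (2 - 5*u + 3*(u*u))%R; [ring|]; rewrite U; ring).
  auto.
Qed.

Lemma valid3_of_hd2 L : valid 2 L -> hd2 L = false -> valid 3 L.
Proof.
  destruct L as [|e L']; [auto|]. intros [H1 H2] H. split; auto.
  destruct (Nat.eq_dec e 2); [subst; discriminate|lia].
Qed.

Lemma T1_bounds L : valid 2 L ->
  (- u / 2 < Tsum (map S L) < (1 - u) / 2 /\
   (hd2 L = true -> Tsum (map S L) < mT) /\ (hd2 L = false -> mT < Tsum (map S L)))%R.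
Proof.
  intros HV. destruct u_pows as (A2 & A3 & _).
  assert (HV3 := valid_map _ _ HV).
  pose proof (T_bounds (map S L) 1 HV3) as [_ TB]. specialize (TB eq_refl).
  replace (1+1) with 2 in TB by lia. rewrite pow_1, A2 in TB. unfold mT.
  split; [exact TB|split].
  - intros H. destruct L as [|e L']; [discriminate|].
    destruct (Nat.eq_dec e 2) as [->|]; [|destruct e as [|[|[|]]]; try discriminate; lia].
    destruct HV as [_ HV']. apply valid_map in HV'.
    pose proof (T_cons 1 (map S L') HV') as [_ TC]. specialize (TC eq_refl).
    replace (1+2) with 3 in TC by lia. simpl map. rewrite A3, pow_1 in TC. lra.
  - intros H. apply valid3_of_hd2 in H; auto. apply valid_map in H.
    pose proof (T_bounds (map S L) 2 H) as [TE _]. specialize (TE eq_refl).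
    replace (2 + 1) with 3 in TE by lia. rewrite A3 in TE. lra.
Qed.

Lemma T2_bounds L : valid 2 L ->
  (mT < Tsum (map S (map S L)) < (1 - u) / 2)%R.
Proof.
  intros HV. destruct u_pows as (A2 & A3 & _).
  assert (HV4 := valid_map _ _ (valid_map _ _ HV)).
  pose proof (T_bounds _ 2 HV4) as [TE _]. specialize (TE eq_refl).
  replace (2 + 1) with 3 in TE by lia. rewrite A3, A2 in TE. unfold mT. lra.
Qed.

Definition sel (s : Z) (p q : Z) : Z := if Z.eqb s 1 then p else q.

Lemma core L : valid 2 L ->
  let n := V L + 1 in
  let s := sgn L in
  let B := Bz L in let B2 := Bz (map S L) in let B3 := Bz (map S (map S L)) in
  (s = 1 \/ s = -1)%Z /\
  Z.of_nat (a n) = (s * (B - 1))%Z /\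
  Z.of_nat (a (b n)) = (s * (B2 - 1))%Z /\
  Z.of_nat (b (a n)) = sel s (B2 - 2) (- B2 + 1) /\
  Z.of_nat (a (b (b n))) = (s * (B3 - 1))%Z /\
  Z.of_nat (c (a (b n))) = (Z.of_nat (a (b n)) + sel s (B3 - 2) (- B3 + 2))%Z /\
  (hd2 L = true -> Z.of_nat (c (a n)) = (Z.of_nat (a n) + sel s (B2 - 1) (- B2 + 1))%Z) /\
  (hd2 L = false -> Z.of_nat (c (a n)) = (Z.of_nat (a n) + sel s (B2 - 2) (- B2 + 2))%Z).
Proof.
  intros HV n s B B2 B3.
  assert (HV1 : valid 2 (map S L)) by (apply (valid_weaken 3); [apply valid_map; auto|lia]).
  assert (HV2 : valid 2 (map S (map S L))) by (apply (valid_weaken 3); [apply valid_map; auto|lia]).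
  destruct (a_formula L HV) as (HA & _).
  destruct (a_formula (map S L) HV1) as (HAb & _).
  destruct (a_formula (map S (map S L)) HV2) as (HAbb & _).
  rewrite !sgn_map in HAb. rewrite !sgn_map in HAbb.
  assert (Hbn : b n = V (map S L) + 1) by (apply b_formula; auto).
  assert (Hbbn : b (b n) = V (map S (map S L)) + 1) by (rewrite Hbn; apply b_formula; auto).
  destruct (T1_bounds L HV) as (T1a & T1b & T1c).
  pose proof (T2_bounds L HV) as T2a.
  pose proof (Bz_shift L) as HB2. pose proof (Bz_shift (map S L)) as HB3.
  assert (Hs := sgn_pm L).
  destruct u_facts as [[U1 U2] _]. unfold mT in *.
  destruct (bc_gen (a n) B B2 s (Tsum (map S L)) Hs HA HB2 ltac:(lra)) as (G1 & G2 & G3).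
  assert (HAb' : Z.of_nat (a (b n)) = (s * (B2 - 1))%Z) by (rewrite Hbn; exact HAb).
  destruct (bc_gen (a (b n)) B2 B3 s (Tsum (map S (map S L))) Hs HAb' HB3 ltac:(lra)) as (H1 & H2 & H3).
  split; [exact Hs|]. split; [exact HA|]. split; [exact HAb'|]. split; [exact G1|].
  split; [rewrite Hbbn; exact HAbb|].
  split; [apply H2; unfold mT; lra|].
  split.
  - intros Hh. apply G3. specialize (T1b Hh). unfold mT in *. lra.
  - intros Hh. apply G2. specialize (T1c Hh). unfold mT in *. lra.
Qed.

Close Scope R_scope. Open Scope nat_scope.

Lemma sgn_len L : (sgn L = 1%Z /\ length L mod 2 = 1) \/ (sgn L = (-1)%Z /\ length L mod 2 = 0).
Proof.
  induction L as [|e L IH]; [right; split; reflexivity|].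
  cbn [sgn length]. destruct IH as [[A B]|[A B]]; [right|left]; split; try lia; pose proof (Nat.div_mod_eq (length L) 2); pose proof (Nat.mod_upper_bound (length L) 2 ltac:(lia)); pose proof (Nat.div_mod_eq (S (length L)) 2); pose proof (Nat.mod_upper_bound (S (length L)) 2 ltac:(lia)); lia.
Qed.

Lemma a_diff Lw : valid 2 Lw -> (forall r, Lw <> 2 :: 4 :: r) ->
  let z := V (map S Lw) + 1 in
  (Z.of_nat (a (z + 1)) - Z.of_nat (a z) = -2 \/
   Z.of_nat (a (z + 1)) - Z.of_nat (a z) = 0 \/
   Z.of_nat (a (z + 1)) - Z.of_nat (a z) = 2)%Z.
Proof.
  intros HV Hn z. subst z.
  destruct Lw as [|e r].
  - vm_compute. right; left; reflexivity.
  - destruct (Nat.eq_dec e 2) as [->|He].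
    + assert (Hr5 : valid 5 r).
      { destruct HV as [_ HV]. destruct r as [|e' r']; [exact I|].
        destruct HV as [H1 H2]. split; auto.
        destruct (Nat.eq_dec e' 4) as [->|]; [|lia]. exfalso. apply (Hn r'). reflexivity. }
      set (M := map S r).
      assert (HM : valid 6 M) by (apply valid_map; auto).
      assert (V3 : valid 2 (3 :: M)) by (split; [lia|]; apply (valid_weaken 6); auto).
      assert (V4 : valid 2 (4 :: M)) by (split; [lia|]; auto).
      destruct (a_formula _ V3) as (A3 & _). destruct (a_formula _ V4) as (A4 & _).
      change (V (map S (2 :: r))) with (fib 3 + V M).
      replace (fib 3 + V M + 1 + 1) with (V (4 :: M) + 1) by (cbn [V]; simpl fib; lia).
      replace (fib 3 + V M + 1) with (V (3 :: M) + 1) by reflexivity.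
      rewrite A3, A4. cbn [sgn Bz]. simpl fib. simpl Z.of_nat.
      destruct (sgn_pm M) as [E|E]; rewrite E; lia.
    + destruct HV as [H1 H2].
      set (M := map S (e :: r)).
      assert (HM : valid 4 M) by (apply valid_map; split; [lia|auto]).
      assert (V2 : valid 2 M) by (apply (valid_weaken 4); auto).
      assert (V2' : valid 2 (2 :: M)) by (split; [lia|auto]).
      destruct (a_formula _ V2) as (A1 & _). destruct (a_formula _ V2') as (A2 & _).
      replace (V M + 1 + 1) with (V (2 :: M) + 1) by (cbn [V]; simpl fib; lia).
      rewrite A1, A2. cbn [sgn Bz]. simpl fib. simpl Z.of_nat.
      destruct (sgn_pm M) as [E|E]; rewrite E; lia.
Qed.

Lemma rep_of n : 1 <= n -> exists L, valid 2 L /\ n = V L + 1.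
Proof.
  intros H. destruct (zeck_exists (n - 1)) as (L & A & B). exists L. split; auto. lia.
Qed.

Ltac get_core L HV :=
  let C := fresh "C" in
  pose proof (core L HV) as C; cbv zeta in C;
  destruct C as (Hs & HA & HAb & HbA & HAbb & HcAb & Hc1 & Hc2).

Lemma partA n : b (a n) <= a (b n).
Proof.
  destruct (Nat.eq_dec n 0) as [->|Hn].
  - rewrite b0. change (a 0) with 0. rewrite b0. lia.
  - destruct (rep_of n ltac:(lia)) as (L & HV & ->). get_core L HV.
    apply Nat2Z.inj_le. rewrite HAb, HbA. unfold sel.
    destruct Hs as [E|E]; rewrite E; simpl Z.eqb; cbv iota; lia.
Qed.

Lemma partB L : valid 2 L -> x (V L + 1) = Z.of_nat (length L mod 2).
Proof.
  intros HV. get_core L HV. unfold x. rewrite HAb, HbA. unfold sel.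
  destruct (sgn_len L) as [[E F]|[E F]]; rewrite F, E; simpl Z.eqb; cbv iota; lia.
Qed.

Lemma partC n : a (b (a n)) <= b (a (b n)).
Proof.
  pose proof (partA n). pose proof (a_le_b (b (a n))). pose proof (b_mono _ _ H). lia.
Qed.

Lemma partD n : let e := (Z.of_nat (a (a (b n))) - Z.of_nat (a (b (a n))))%Z in
     e = (-2)%Z \/ e = 0%Z \/ e = 2%Z.
Proof.
  intros e. subst e.
  destruct (Nat.eq_dec n 0) as [->|Hn].
  - rewrite b0. change (a 0) with 0. rewrite b0. right; left; lia.
  - destruct (rep_of n ltac:(lia)) as (L & HV & ->). get_core L HV.
    destruct Hs as [E|E].
    2:{ assert (a (b (V L + 1)) = b (a (V L + 1))).
        { apply Nat2Z.inj. rewrite HAb, HbA. unfold sel. rewrite E. simpl Z.eqb. cbv iota. lia. }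
        rewrite H. right; left; lia. }
    assert (Hab : a (b (V L + 1)) = b (a (V L + 1)) + 1).
    { apply Nat2Z.inj. rewrite Nat2Z.inj_add, HAb, HbA. unfold sel. rewrite E. simpl Z.eqb. cbv iota. lia. }
    destruct (a_formula L HV) as (_ & Hy & _).
    set (y := a (V L + 1)) in *.
    destruct (zeck_exists (y - 1)) as (Lw & HVw & HVy).
    assert (Hby : b y = V (map S Lw) + 1).
    { replace y with (V Lw + 1) by lia. apply b_formula; auto. }
    rewrite Hab, Hby.
    assert (Hn24 : forall r, Lw <> 2 :: 4 :: r).
    { intros r Hr. subst Lw.
      destruct HVw as [_ [_ Hr]].
      pose proof (P_bounds r 4 Hr) as [PB _]. specialize (PB eq_refl).
      pose proof (V_shift (2 :: 4 :: r)) as VS.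
      pose proof (T1_bounds L HV) as (T1a & _).
      pose proof (Bz_shift L) as HB2.
      assert (Z.of_nat (V (map S (2 :: 4 :: r))) = (Bz (map S L) - 3)%Z).
      { assert (Z.of_nat (b y) = (Bz (map S L) - 2)%Z).
        { rewrite HbA. unfold sel. rewrite E. reflexivity. }
        rewrite Hby in H. lia. }
      assert (Z.of_nat (V (2 :: 4 :: r)) = (Bz L - 2)%Z).
      { pose proof HA as HA'. rewrite E in HA'. lia. }
      rewrite INR_IZR_INZ, H in VS. rewrite INR_IZR_INZ, H0 in VS.
      rewrite !minus_IZR in VS. rewrite HB2 in VS.
      cbn [Psum] in VS. rewrite !psi_pow in VS. simpl Nat.even in VS. cbv iota in VS.
      destruct u_pows as (A2 & A3 & A4 & A6). rewrite A2, A4 in VS.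
      replace (4 + 2)%nat with 6%nat in PB by lia. rewrite A6 in PB.
      destruct u_facts as [[U1 U2] _]. rewrite phi_u in VS. simpl in VS. lra. }
    pose proof (a_diff Lw HVw Hn24) as D. cbv zeta in D. lia.
Qed.

Lemma partEF n : 1 <= n ->
  (d n = (-1)%Z \/ d n = 0%Z \/ d n = 1%Z) /\ (d n = 0%Z <-> fword (n - 1) = 1).
Proof.
  intros Hn. destruct (rep_of n Hn) as (L & HV & ->). get_core L HV.
  replace (V L + 1 - 1) with (V L) by lia. rewrite fword_formula by auto.
  unfold d. destruct (hd2 L) eqn:Eh.
  - rewrite (Hc1 eq_refl), HAb. unfold sel.
    destruct Hs as [E|E]; rewrite E; simpl Z.eqb; cbv iota; split; try lia; tauto.
  - rewrite (Hc2 eq_refl), HAb. unfold sel.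
    destruct Hs as [E|E]; rewrite E; simpl Z.eqb; cbv iota; split; try lia; split; intro; lia.
Qed.

Lemma partE n : d n = (-1)%Z \/ d n = 0%Z \/ d n = 1%Z.
Proof.
  destruct (Nat.eq_dec n 0) as [->|Hn].
  - unfold d. change (a 0) with 0. rewrite b0, c0. change (a 0) with 0. right; left; reflexivity.
  - apply partEF. lia.
Qed.

Lemma partG n : 1 <= n ->
  (Z.of_nat (c (a (b n))) + Z.of_nat (a (b n)) - Z.of_nat (a (b (b n)))
       - 2 * Z.of_nat (b (a n)) = 1)%Z.
Proof.
  intros Hn. destruct (rep_of n Hn) as (L & HV & ->). get_core L HV.
  rewrite HcAb, HAb, HAbb, HbA. unfold sel.
  destruct Hs as [E|E]; rewrite E; simpl Z.eqb; cbv iota; lia.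
Qed.

Close Scope R_scope. Open Scope nat_scope.

Theorem theorem22 :
  (* (a) *)
  (forall n : nat, b (a n) <= a (b n))%nat /\
  (* (b) *)
  (forall n : nat, (1 <= n)%nat ->
     (exists s, fib_rep (n - 1) s) /\
     (forall s, fib_rep (n - 1) s -> x n = Z.of_nat (count_ones s mod 2))) /\
  (* (c) *)
  (forall n : nat, a (b (a n)) <= b (a (b n)))%nat /\
  (* (d) *)
  (forall n : nat, let e := (Z.of_nat (a (a (b n))) - Z.of_nat (a (b (a n))))%Z in
     e = (-2)%Z \/ e = 0%Z \/ e = 2%Z) /\
  (* (e) *)
  (forall n : nat, d n = (-1)%Z \/ d n = 0%Z \/ d n = 1%Z) /\
  (* (f) *)
  (forall n : nat, (1 <= n)%nat -> (d n = 0%Z <-> fword (n - 1) = 1%nat)) /\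
  (* (g) *)
  (forall n : nat, (1 <= n)%nat ->
     (Z.of_nat (c (a (b n))) + Z.of_nat (a (b n)) - Z.of_nat (a (b (b n)))
       - 2 * Z.of_nat (b (a n)) = 1)%Z).
Proof.
  split; [exact partA|].
  split.
  { intros n Hn. split; [apply rep_exists|].
    intros s [H1 H2].
    replace n with (V (toL s) + 1) by (rewrite V_toL; lia).
    rewrite partB by (apply toL_valid; auto). rewrite len_toL. reflexivity. }
  split; [exact partC|].
  split; [exact partD|].
  split; [exact partE|].
  split; [intros n Hn; apply partEF; auto|].
  exact partG.
Qed.
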